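(* Let $\mathbf L$ be an algebraic lattice with an equa-interior operator $\eta$. If $x,z_1,\dots,z_k,a_1,\dots,a_k$ are coatoms of $\mathbf L$ such that $x\wedge z_i\le a_i$ properly for each $i=1,\dots,k$, then $\eta(x)\vee\bigwedge_{i=1}^k z_i=1$.
   Context: An equa-interior operator on an algebraic lattice $\mathbf L$ is a map $\eta:L\to L$ such that for all $x,y,z\in L$: (I1) $\eta(x)\le x$; (I2) $x\ge y$ implies $\eta(x)\ge\eta(y)$; (I3) $\eta^2(x)=\eta(x)$; (I4) $\eta(1)=1$; (I5) if $\eta(x)=u$ for all $x\in X\subseteq L$ then $\eta(\bigvee X)=u$; (I6) $\eta(x)\vee(y\wedge z)=(\eta(x)\vee y)\wedge(\eta(x)\vee z)$; (I7) the image $\eta(L)$ is the complete join subsemilattice of $L$ generated by the elements of $\eta(L)$ that are compact in $\mathbf L$; (I8) there is a compact element $w\in L$ with $\eta(w)=w$ such that the interval $[w,1]$ is isomorphic to the congruence lattice of a join semilattice with $0$. For coatoms, ''$x\wedge z\le a$ properly'' means $x\wedge z\le a$ while $x\not\le a$ and $z\not\le a$. *)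

(* Defs.v *)
From HB Require Import structures.
From mathcomp Require Import all_boot all_order.
Set Implicit Arguments. Unset Strict Implicit. Unset Printing Implicit Defensive.
Import Order.TTheory.
Local Open Scope order_scope.

Section Defs.
Context {d : Order.disp_t} {T : tbLatticeType d}.

Definition is_sup (X : T -> Prop) (s : T) : Prop :=
  (forall x, X x -> x <= s) /\ (forall u, (forall x, X x -> x <= u) -> s <= u).

Definition complete_lattice : Prop := forall X : T -> Prop, exists s, is_sup X s.

Definition compact (c : T) : Prop :=
  forall (X : T -> Prop) (s : T), is_sup X s -> c <= s ->
    exists F : seq T, (forall x, x \in F -> X x) /\ c <= \join_(x <- F) x.

Definition algebraic_lattice : Prop :=
  complete_lattice /\ forall x : T, is_sup (fun c => compact c /\ c <= x) x.

Definition coatom (a : T) : Prop :=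
  a < \top /\ forall y, a <= y -> y = a \/ y = \top.

Definition meet_le_properly (x z a : T) : Prop :=
  x `&` z <= a /\ ~ (x <= a) /\ ~ (z <= a).
End Defs.

Definition join_semilattice0 (S : Type) (j : S -> S -> S) (z : S) : Prop :=
  (forall a b c, j a (j b c) = j (j a b) c) /\ (forall a b, j a b = j b a) /\
  (forall a, j a a = a) /\ (forall a, j z a = a).

Definition congruence (S : Type) (j : S -> S -> S) (R : S -> S -> Prop) : Prop :=
  (forall a, R a a) /\ (forall a b, R a b -> R b a) /\
  (forall a b c, R a b -> R b c -> R a c) /\
  (forall a b c, R a b -> R (j a c) (j b c)).

(* The interval [w, 1] of T is (order-, hence lattice-) isomorphic to the
   congruence lattice Con(S, j) ordered by inclusion. *)
Definition interval_iso_Con {d : Order.disp_t} {T : tbLatticeType d} (w : T)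
  (S : Type) (j : S -> S -> S) : Prop :=
  exists f : T -> (S -> S -> Prop),
    (forall x, w <= x -> congruence j (f x)) /\
    (forall x y, w <= x -> w <= y ->
       (x <= y <-> (forall a b, f x a b -> f y a b))) /\
    (forall R, congruence j R -> exists x, w <= x /\ (forall a b, f x a b <-> R a b)).

Definition equa_interior {d : Order.disp_t} {T : tbLatticeType d} (eta : T -> T) : Prop :=
  (forall x, eta x <= x) /\
  (forall x y, y <= x -> eta y <= eta x) /\
  (forall x, eta (eta x) = eta x) /\
  eta \top = \top /\
  (* I5 *) (forall (X : T -> Prop) (u s : T), (exists x, X x) ->
              (forall x, X x -> eta x = u) -> is_sup X s -> eta s = u) /\
  (* I6 *) (forall x y z, eta x `|` (y `&` z) = (eta x `|` y) `&` (eta x `|` z)) /\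
  (forall y, (exists x, y = eta x) <->
              exists Y : T -> Prop,
                (forall c, Y c -> compact c /\ exists x, c = eta x) /\ is_sup Y y) /\
  (exists w : T, compact w /\ eta w = w /\
              exists (S : Type) (j : S -> S -> S) (z : S),
                join_semilattice0 j z /\ interval_iso_Con w j).

(* Main.v *)
Require Import Defs.
From HB Require Import structures.
From mathcomp Require Import all_boot all_order.
Import Order.TTheory.
Local Open Scope order_scope.

Lemma coatom_join (d : Order.disp_t) (T : tbLatticeType d) (c t : T) :
  coatom c -> ~ (t <= c) -> t `|` c = \top.
Proof.
move=> [_ Hc] Ht; case: (Hc (t `|` c) (leUr _ _)) => // E.
by exfalso; apply: Ht; rewrite -E leUl.
Qed.

Theorem theorem7p3 (d : Order.disp_t) (T : tbLatticeType d) (eta : T -> T)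
  (k : nat) (x : T) (z a : 'I_k -> T) :
  algebraic_lattice (T := T) -> equa_interior eta ->
  coatom x -> (forall i, coatom (z i)) -> (forall i, coatom (a i)) ->
  (forall i, meet_le_properly x (z i) (a i)) ->
  eta x `|` \meet_(i < k) z i = \top.
Proof.
move=> _ [I1 [I2 [I3 [I4 [I5 [I6 _]]]]]] Cx Cz Ca Hp.
have key : forall i, eta x `|` z i = \top.
  move=> i; have [Hm [Hxa Hza]] := Hp i.
  apply: coatom_join; first exact: Cz.
  move=> Hez.
  have Hexz : eta x <= x `&` z i by rewrite lexI I1 Hez.
  have Hea : eta x <= a i by apply: le_trans Hexz Hm.
  have Heax : eta (a i) <= x.
    apply/negP => /negP Hn.
    have Hj := @coatom_join _ _ x _ Cx (fun h => (negP Hn) h).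
    have E := I6 (a i) x (z i).
    have L : eta (a i) `|` (x `&` z i) <= a i by rewrite leUx I1 Hm.
    rewrite E Hj meet1x in L.
    by apply: Hza; apply: le_trans L; rewrite leUr.
  have E1 : eta (a i) <= eta x by rewrite -I3; apply: I2.
  have E2 : eta x <= eta (a i) by rewrite -I3; apply: I2.
  have Eq : eta (a i) = eta x by apply/eqP; rewrite eq_le E1 E2.
  have Hxa1 : x `|` a i = \top.
    rewrite joinC; apply: coatom_join => // Hax.
    have [_ Hc] := Ca i; case: (Hc x Hax) => E.
      by apply: Hxa; rewrite E.
    by move: Cx => [+ _]; rewrite E ltxx.
  have Hs : is_sup (fun t => t = x \/ t = a i) (x `|` a i).
    split; first by move=> t [->|->]; [rewrite leUl | rewrite leUr].
    by move=> u Hu; rewrite leUx (Hu x (or_introl erefl)) (Hu (a i) (or_intror erefl)).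
  have := I5 _ (eta x) _ (ex_intro _ x (or_introl erefl)) _ Hs.
  rewrite Hxa1 I4 => H; have {}H : \top = eta x by apply: H => t [->|->].
  move: Cx => [+ _] => /(le_lt_trans (I1 x)).
  by rewrite -H ltxx.
apply: (big_ind (fun y => eta x `|` y = \top)).
- by rewrite joinx1.
- by move=> y1 y2 H1 H2; rewrite I6 H1 H2 meetx1.
- by move=> i _; apply: key.
Qed.
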